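(* Let $n,N\in\mathbb N$, $I=\{1,\dots,n\}$, $J=\{1,\dots,N\}$, $G$ a nonempty finite set of maps $I\to J$ with normalized counting measure $\mathbb P$ and expectation $\mathbb E$, such that $\mathbb P(\{g\in G:g(i)=j\})=1/N$ for all $i\in I$, $j\in J$. Let $a\in\mathbb R^{n\times N}$. Then for every integer $1\le\ell\le n$, $$\mathbb E\sum_{k=1}^{\ell}\operatorname{k\text{-}max}_{1\le i\le n}|a_{ig(i)}|\le\frac2N\|a\|_{M_{\ell N}},$$ where $a$ is regarded as a vector in $\mathbb R^{nN}$ and $M_{\ell N}(t)=0$ for $0\le t\le 1/(\ell N)$, $M_{\ell N}(t)=t-1/(\ell N)$ for $t>1/(\ell N)$.
   Context: $\mathbb P(E)=|E|/|G|$ for $E\subseteq G$. For a vector $x$ with non-negative entries, $\operatorname{k\text{-}max}_{1\le i\le n}x_i$ denotes its $k$-th largest entry counted with multiplicity. For an Orlicz function $M$ (a convex, non-constant function $M:[0,\infty)\to[0,\infty)$ with $M(0)=0$), the Luxemburg norm on $\mathbb R^m$ is $\|x\|_M=\inf\{\lambda>0:\sum_{i=1}^mM(|x_i|/\lambda)\le1\}$. *)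

(* Defs.v *)
From HB Require Import structures.
From mathcomp Require Import all_boot all_order all_algebra.
Set Implicit Arguments. Unset Strict Implicit. Unset Printing Implicit Defensive.
Import Order.TTheory GRing.Theory Num.Theory.
Local Open Scope ring_scope.

Definition Prob (R : realFieldType) (T : finType) (G E : {set T}) : R :=
  #|E|%:R / #|G|%:R.

Definition Expect (R : realFieldType) (T : finType) (G : {set T}) (f : T -> R) : R :=
  (\sum_(g in G) f g) / #|G|%:R.

(* k-th largest entry (counted with multiplicity), k >= 1. *)
Definition kmax (R : realFieldType) (n : nat) (k : nat) (x : 'I_n -> R) : R :=
  nth 0 (sort (fun u v : R => v <= u) [seq x i | i <- enum 'I_n]) k.-1.

Definition M_lN (R : realFieldType) (l N : nat) (t : R) : R :=
  if t <= 1 / (l * N)%:R then 0 else t - 1 / (l * N)%:R.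

(* Feasible lambdas in the Luxemburg norm of a (as a vector in R^{mN}). *)
Definition lux_feasible (R : realFieldType) (m N : nat) (M : R -> R)
    (a : 'M[R]_(m, N)) (lam : R) : Prop :=
  0 < lam /\ \sum_(i < m) \sum_(j < N) M (`|a i j| / lam) <= 1.

Definition is_luxemburg_norm (R : realFieldType) (m N : nat) (M : R -> R)
    (a : 'M[R]_(m, N)) (x : R) : Prop :=
  (forall lam, lux_feasible M a lam -> x <= lam) /\
  (forall y, (forall lam, lux_feasible M a lam -> y <= lam) -> y <= x).

(* Main.v *)
Require Import Defs.
From HB Require Import structures.
From mathcomp Require Import all_boot all_order all_algebra.
From mathcomp Require Import ring lra.
Import Order.TTheory GRing.Theory Num.Theory.
Local Open Scope ring_scope.

Lemma top_bound (R : realFieldType) (n l : nat) (x : 'I_n -> R) (c : R)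
  (p : R -> R) (hp : forall t, 0 <= p t) (hx : forall t, t <= c + p t)
  (hl : (l <= n)%N) :
  \sum_(1 <= k < l.+1) kmax k x <= l%:R * c + \sum_i p (x i).
Proof.
rewrite /kmax.
set s := sort _ _.
have hs : size s = n by rewrite /s size_sort size_map size_enum_ord.
rewrite big_add1 /= big_mkord.
apply: (le_trans (ler_sum _ (fun (k : 'I_l) _ => hx (nth 0 s k)))).
rewrite big_split /= sumr_const card_ord mulr_natl lerD2l.
have -> : \sum_i p (x i) = \sum_(v <- s) p v.
  rewrite (perm_big _ (permEl (perm_sort _ _))) big_map big_enum /=.
  by apply: eq_bigl => i; rewrite inE.
rewrite (big_nth 0) /= hs -(big_mkord xpredT (fun k => p (nth 0 s k))).
rewrite (@big_cat_nat _ _ _ l 0 n _ _ (leq0n l) hl) /= lerDl.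
by apply: sumr_ge0.
Qed.

Theorem proposition4p2 (R : realFieldType) (n N : nat)
  (G : {set {ffun 'I_n -> 'I_N}}) (HG : G != set0)
  (Hunif : forall (i : 'I_n) (j : 'I_N),
      Prob R G [set g in G | g i == j] = 1 / N%:R)
  (a : 'M[R]_(n, N)) (l : nat) (hl1 : (1 <= l)%N) (hln : (l <= n)%N)
  (x : R) (hx : is_luxemburg_norm (@M_lN R l N) a x) :
  Expect G (fun g => \sum_(1 <= k < l.+1) kmax k (fun i => `|a i (g i)|))
    <= 2 / N%:R * x.
Proof.
have [g0 g0G] := set0Pn _ HG.
have Npos : (0 < N)%N.
  have := ltn_ord (g0 (Ordinal (leq_trans hl1 hln))).
  exact: leq_ltn_trans (leq0n _).
have Gpos : (0 < #|G|)%N by apply/card_gt0P; exists g0.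
have NR : 0 < N%:R :> R by rewrite ltr0n.
have GR : 0 < #|G|%:R :> R by rewrite ltr0n.
set F := (X in Expect G X).
set c : R := 1 / (l * N)%:R.
have lc : l%:R * c = 1 / N%:R.
  rewrite /c natrM; field.
  by rewrite !pnatr_eq0 -!lt0n Npos hl1.
have key : forall lam, lux_feasible (@M_lN R l N) a lam -> Expect G F <= 2 / N%:R * lam.
  move=> lam [lam0 hsum].
  set q := fun (i : 'I_n) (j : 'I_N) => lam * @M_lN R l N (`|a i j| / lam).
  have M0 : forall t, 0 <= @M_lN R l N t.
    by move=> t; rewrite /M_lN; case: ifP => // /negbT; rewrite -ltNge subr_ge0 => /ltW.
  have Mb : forall t, t <= lam * c + lam * @M_lN R l N (t / lam).
    move=> t; rewrite -mulrDr -ler_pdivrMl // mulrC.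
    rewrite /M_lN -/c; case: ifP => [h|_]; first by rewrite addr0.
    by rewrite addrC subrK.
  have hF : forall g, F g <= l%:R * (lam * c) + \sum_i q i (g i).
    move=> g; rewrite /F /q.
    apply: (@top_bound R n l (fun i => `|a i (g i)|) (lam * c) (fun t => lam * @M_lN R l N (t / lam))) => //.
    by move=> t; rewrite mulr_ge0 ?M0 // ltW.
  have hcount : forall i, \sum_(g in G) q i (g i) = \sum_j (#|G|%:R / N%:R * q i j).
    move=> i; rewrite (partition_big (fun g : {ffun 'I_n -> 'I_N} => g i) xpredT) //=.
    apply: eq_bigr => j _.
    rewrite (eq_bigr (fun _ => q i j)); last by move=> g /andP [_ /eqP ->].
    rewrite sumr_const.
    have := Hunif i j; rewrite /Prob => /(congr1 (fun z => z * #|G|%:R)).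
    rewrite divfK ?gt_eqF // => hS.
    have -> : #|[pred g in G | g i == j]| = #|[set g in G | g i == j]|.
      by apply: eq_card => g; rewrite inE.
    by rewrite -[q i j *+ _]mulr_natl hS mul1r (mulrC (N%:R^-1)).
  rewrite /Expect.
  apply: le_trans (_ : (\sum_(g in G) (l%:R * (lam * c) + \sum_i q i (g i))) / #|G|%:R <= _).
    by rewrite ler_pM2r ?invr_gt0 //; apply: ler_sum => g _; exact: hF.
  rewrite big_split /= sumr_const exchange_big /=.
  rewrite (eq_bigr _ (fun i _ => hcount i)) /=.
  rewrite mulrDl -[_ *+ #|G|]mulr_natr mulfK ?gt_eqF // mulrCA lc.
  have -> : \sum_(i < n) \sum_(j < N) (#|G|%:R / N%:R * q i j) =
        #|G|%:R / N%:R * lam * \sum_(i < n) \sum_(j < N) @M_lN R l N (`|a i j| / lam).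
    rewrite mulr_sumr; apply: eq_bigr => i _; rewrite mulr_sumr; apply: eq_bigr => j _.
    by rewrite /q mulrA.
  set S := \sum_(i < n) _.
  have -> : #|G|%:R / N%:R * lam * S / #|G|%:R = lam / N%:R * S.
    by field; rewrite !gt_eqF.
  have h : lam / N%:R * S <= lam / N%:R.
    by rewrite -[X in _ <= X]mulr1 ler_pM2l ?divr_gt0.
  apply: le_trans (_ : lam * (1 / N%:R) + lam / N%:R <= _).
    by rewrite lerD2l.
  have -> : lam * (1 / N%:R) + lam / N%:R = 2 / N%:R * lam.
    by field; rewrite gt_eqF.
  by [].
case: hx => _ hinf.
have : Expect G F * N%:R / 2 <= x.
  apply: hinf => lam hlam.
  have h := key lam hlam.
  have -> : lam = 2 / N%:R * lam * N%:R / 2 by field; rewrite gt_eqF.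
  by rewrite ler_pM2r ?invr_gt0 ?ltr0n // ler_pM2r.
move=> h.
apply: le_trans (_ : 2 / N%:R * (Expect G F * N%:R / 2) <= _).
  by rewrite le_eqVlt; apply/orP; left; apply/eqP; field; rewrite gt_eqF.
by rewrite ler_pM2l ?divr_gt0 ?ltr0n.
Qed.
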